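(* Under the hypotheses below, define for $r,r'\in C$ the two-layer transfer matrices $\mathbf T(r,r'):=T^{[0]}(r)\,T^{[1]}(r')$ and $\dot{\mathbf T}(r,r'):=\dot T^{[0]}(r)\,\dot T^{[1]}(r')$, operators on $W=\bigotimes_{l,m}V_{(1_l2_m)}$. If there exists $(t,t')\in C^2$ such that $\dot{\mathbf T}(t,t')$ is diagonalizable with pairwise distinct eigenvalues, then $[\mathbf T(r,r'),\mathbf T(s,s')]=0$ for all $(r,r'),(s,s')\in C^2$.
   Context: Let $V$ be a finite-dimensional complex vector space and $C$ a set (of spectral parameters). Let $R,\dot R,\ddot R,\dddot R:\mathbb{Z}/2\mathbb{Z}\times C^3\to\mathrm{End}(V\otimes V\otimes V)$ be maps; write $X^{[\sigma]}(r_1,r_2,r_3)$ for the value of $X\in\{R,\dot R,\ddot R,\dddot R\}$ at $(\sigma,r_1,r_2,r_3)$. Superscript colors $[\sigma]$ are always read modulo 2. Notation: consider a finite totally ordered set of ''planes'', each plane $\alpha$ carrying a parameter $r_\alpha\in C$. For each pair $\alpha<\beta$ let $V_{(\alpha\beta)}$ be a copy of $V$. For $\alpha<\beta<\gamma$, $X^{[\sigma]}_{(\alpha\beta\gamma)}$ denotes the operator on the tensor product of all the spaces $V_{(\cdot\cdot)}$ under consideration that acts as $X^{[\sigma]}(r_\alpha,r_\beta,r_\gamma)$ on $V_{(\alpha\beta)}\otimes V_{(\alpha\gamma)}\otimes V_{(\beta\gamma)}$ (in this order) and as the identity on all other factors. Bicolored tetrahedron equations (BTE$[\sigma]$): for any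 four planes $1<2<3<4$ with arbitrary parameters $r_1,r_2,r_3,r_4\in C$, on $V_{(12)}\otimes V_{(13)}\otimes V_{(14)}\otimes V_{(23)}\otimes V_{(24)}\otimes V_{(34)}$, $$R^{[\sigma]}_{(123)}\dot R^{[\sigma+1]}_{(124)}\ddot R^{[\sigma]}_{(134)}\dddot R^{[\sigma+1]}_{(234)}=\dddot R^{[\sigma]}_{(234)}\ddot R^{[\sigma+1]}_{(134)}\dot R^{[\sigma]}_{(124)}R^{[\sigma+1]}_{(123)}.$$ Fix integers $L,M\ge1$, planes $1_1<\dots<1_{2L}<2_1<\dots<2_{2M}$ with fixed arbitrary parameters $r_{1_l},r_{2_m}\in C$. Trace reduction: for planes $\alpha<\beta$ larger than all $1_l$, define $$\mathbf{R}^{[\sigma]}_{\alpha\beta}:=\mathrm{Tr}_{V_{(\alpha\beta)}}\Bigl(R^{[\sigma+1]}_{(1_1\alpha\beta)}R^{[\sigma+2]}_{(1_2\alpha\beta)}\cdots R^{[\sigma+2L]}_{(1_{2L}\alpha\beta)}\Bigr)$$ (partial trace over $V_{(\alpha\beta)}$), an operator on $\bigotimes_l(V_{(1_l\alpha)}\otimes V_{(1_l\beta)})$; $\dot{\mathbf R},\ddot{\mathbf R}$ are defined likewise from $\dot R,\ddot R$. Layer transfer matrix: for $r\in C$, let $3$ be an extra plane larger than all $2_m$ with parameter $r_3=r$, and set $$T^{[\sigma]}(r):=\mathrm{Tr}_{\bigotimes_l V_{(1_l3)}}\Bigl(\mathbf R^{[\sigma+1]}_{2_1 3}\,\mathbf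 R^{[\sigma+2]}_{2_2 3}\cdots\mathbf R^{[\sigma+2M]}_{2_{2M}3}\Bigr),$$ an operator on $W=\bigotimes_{l,m}V_{(1_l2_m)}$ (it depends only on $r$, not on the label of the extra plane). $\dot T^{[\sigma]}(r)$ is defined the same way with $\mathbf R$ replaced by $\dot{\mathbf R}$. Standing hypotheses: $R,\dot R,\ddot R,\dddot R$ satisfy BTE$[\sigma]$ for both $\sigma\in\mathbb{Z}/2\mathbb{Z}$ and all parameters; $\dddot R^{[\sigma]}(r_1,r_2,r_3)$ is invertible for all $\sigma$ and all $r_1,r_2,r_3\in C$; and for every $\sigma$ and all parameters of two planes $3<4$ larger than all $1_l,2_m$, the trace reduction $\ddot{\mathbf R}^{[\sigma]}_{34}$ is invertible. *)

(* Defs.v *)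
From HB Require Import structures.
From mathcomp Require Import all_boot all_order all_algebra.
From mathcomp Require Import complex.
From mathcomp Require Import reals.
Set Implicit Arguments. Unset Strict Implicit. Unset Printing Implicit Defensive.
Import Order.TTheory GRing.Theory Num.Theory.
Local Open Scope ring_scope.

(* For a finite set S of "space labels", the tensor product of copies of V  *)
(* indexed by S has the standard basis {ffun S -> 'I_d}; an operator on it  *)
(* is a square matrix indexed (via enum_rank) by this basis.                *)

Definition tens (d : nat) (S : finType) := {ffun S -> 'I_d}.
Definition dimT (d : nat) (S : finType) : nat := #|{: tens d S}|.
Definition Op (F : fieldType) (d : nat) (S : finType) := 'M[F]_(dimT d S).

Definition ent (F : fieldType) d (S : finType) (A : Op F d S) (x y : tens d S) : F :=
  A (enum_rank x) (enum_rank y).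

Definition opmx (F : fieldType) d (S : finType) (f : tens d S -> tens d S -> F)
  : Op F d S := \matrix_(i, j) f (enum_val i) (enum_val j).

(* Embedding of an operator X acting on the factors labelled by S' into the  *)
(* tensor product over S, via the (injective) placement map e : S' -> S:     *)
(* it acts as X on the factors e s' (in the order of S') and as the identity *)
(* on all the other factors.                                                 *)
Definition embed (F : fieldType) d (S' S : finType) (e : S' -> S) (X : Op F d S')
  : Op F d S :=
  opmx (fun x y : tens d S =>
          ent X [ffun s' => x (e s')] [ffun s' => y (e s')]
          * (if [forall s, (s \notin codom e) ==> (x s == y s)] then 1 else 0)).

Definition tjoin d (S1 S2 : finType) (x : tens d S1) (z : tens d S2) : tens d (S1 + S2)%type :=
  [ffun s => match s with inl a => x a | inr b => z b end].

Definition ptrace (F : fieldType) d (S1 S2 : finType) (A : Op F d (S1 + S2)%type) : Op F d S1 :=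
  opmx (fun x y : tens d S1 => \sum_(z : tens d S2) ent A (tjoin x z) (tjoin y z)).

(* colors in Z/2Z are booleans: color sigma + k (mod 2) *)
Definition colr (s : bool) (k : nat) : bool := s (+) odd k.

(* A family X^{[sigma]}(r1,r2,r3) of operators on V (x) V (x) V, with      *)
(* spectral parameters r1 r2 r3 in an arbitrary set P (the paper's C).      *)
Definition opfamily (F : fieldType) d (P : Type) :=
  bool -> P -> P -> P -> Op F d 'I_3.

(* Bicolored tetrahedron equation.  Planes 1<2<3<4; the six spaces V_(ab)   *)
(* are labelled by 'I_6 as                                                  *)
(*   (12) = 0, (13) = 1, (14) = 2, (23) = 3, (24) = 4, (34) = 5.            *)

Definition tri (n : nat) (a b c : 'I_n) : 'I_3 -> 'I_n :=
  fun i => match val i with 0 => a | 1 => b | _ => c end.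

Definition i6 (k : nat) : 'I_6 := inord k.

(* X_(123) on V_(12) V_(13) V_(23), X_(124) on V_(12) V_(14) V_(24), etc.   *)
Definition at123 F d (X : Op F d 'I_3) : Op F d 'I_6 := embed (tri (i6 0) (i6 1) (i6 3)) X.
Definition at124 F d (X : Op F d 'I_3) : Op F d 'I_6 := embed (tri (i6 0) (i6 2) (i6 4)) X.
Definition at134 F d (X : Op F d 'I_3) : Op F d 'I_6 := embed (tri (i6 1) (i6 2) (i6 5)) X.
Definition at234 F d (X : Op F d 'I_3) : Op F d 'I_6 := embed (tri (i6 3) (i6 4) (i6 5)) X.

Definition BTE (F : fieldType) d (P : Type) (R Rd Rdd Rddd : opfamily F d P)
    (s : bool) : Prop :=
  forall r1 r2 r3 r4 : P,
    at123 (R s r1 r2 r3) *m at124 (Rd (~~ s) r1 r2 r4)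
      *m at134 (Rdd s r1 r3 r4) *m at234 (Rddd (~~ s) r2 r3 r4)
    = at234 (Rddd s r2 r3 r4) *m at134 (Rdd (~~ s) r1 r3 r4)
      *m at124 (Rd s r1 r2 r4) *m at123 (R (~~ s) r1 r2 r3).

(* Trace reduction.  Planes 1_1 < ... < 1_(2L) (parameters r1 : 'I_(2L) -> P)*)
(* and alpha < beta above them.  Spaces of R_(1_l alpha beta) are           *)
(*   V_(1_l alpha) = inl (inl l),  V_(1_l beta) = inl (inr l),              *)
(*   V_(alpha beta) = inr tt.                                               *)
(* The result acts on (x)_l (V_(1_l alpha) (x) V_(1_l beta)), labelled by   *)
(* 'I_(2L) + 'I_(2L) (inl l = (1_l alpha), inr l = (1_l beta)).             *)
(* Factor l (0-based) carries the color sigma + (l+1).                      *)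

Definition placeR (L : nat) (l : 'I_(2 * L)) : 'I_3 -> ('I_(2 * L) + 'I_(2 * L)) + unit :=
  fun i => match val i with 0 => inl (inl l) | 1 => inl (inr l) | _ => inr tt end.

Definition traceRed (F : fieldType) d (L : nat) (P : Type) (X : opfamily F d P) (s : bool)
    (r1 : 'I_(2 * L) -> P) (ra rb : P) : Op F d ('I_(2 * L) + 'I_(2 * L))%type :=
  ptrace (\big[mulmx/1%:M]_(l < 2 * L)
             embed (placeR l) (X (colr s l.+1) (r1 l) ra rb)).

(* Layer transfer matrix.  Planes 2_1 < ... < 2_(2M) (parameters r2) and an  *)
(* extra plane 3 with parameter r.  Labels of the big space:                *)
(*   V_(1_l 2_m) = inl (l, m)   (these form W),                              *)
(*   V_(1_l 3)   = inr l        (traced out).                                *)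
(* boldR_(2_m 3) acts on (x)_l (V_(1_l 2_m) (x) V_(1_l 3)).                  *)

Definition placeT (L M : nat) (m : 'I_(2 * M)) :
    'I_(2 * L) + 'I_(2 * L) -> ('I_(2 * L) * 'I_(2 * M)) + 'I_(2 * L) :=
  fun i => match i with inl l => inl (l, m) | inr l => inr l end.

Definition layerT (F : fieldType) d (L M : nat) (P : Type) (X : opfamily F d P) (s : bool)
    (r1 : 'I_(2 * L) -> P) (r2 : 'I_(2 * M) -> P) (r : P)
    : Op F d ('I_(2 * L) * 'I_(2 * M))%type :=
  ptrace (\big[mulmx/1%:M]_(m < 2 * M)
             embed (@placeT L M m) (traceRed X (colr s m.+1) r1 (r2 m) r)).

Definition twoLayerT (F : fieldType) d (L M : nat) (P : Type) (X : opfamily F d P)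
    (r1 : 'I_(2 * L) -> P) (r2 : 'I_(2 * M) -> P) (r r' : P)
    : Op F d ('I_(2 * L) * 'I_(2 * M))%type :=
  layerT X false r1 r2 r *m layerT X true r1 r2 r'.

Definition diag_simple (F : fieldType) (n : nat) (A : 'M[F]_n) : Prop :=
  diagonalizable A /\
  exists s : seq F, [/\ size s = n, uniq s & all (eigenvalue A) s].

Definition Cx (R : realType) : fieldType := R[i].

(* Main.v *)
Require Import Defs.
From HB Require Import structures.
From mathcomp Require Import all_boot all_order all_algebra.
From mathcomp Require Import complex.
From mathcomp Require Import reals.
From mathcomp Require Import ring.
From Stdlib Require Import FunctionalExtensionality.
Set Implicit Arguments. Unset Strict Implicit. Unset Printing Implicit Defensive.
Import Order.TTheory GRing.Theory Num.Theory.
Local Open Scope ring_scope.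

HB.instance Definition mulmx_monoid (F : fieldType) (n : nat) :=
  Monoid.isLaw.Build 'M[F]_n 1%:M (@mulmx F n n n) (@mulmxA F n n n n) (@mul1mx F n n) (@mulmx1 F n n).

Section Basics.
Variables (F : fieldType) (d : nat).

Lemma ent_opmx (S : finType) (f : tens d S -> tens d S -> F) x y : ent (opmx f) x y = f x y.
Proof. by rewrite /ent /opmx mxE !enum_rankK. Qed.

Lemma op_ext (S : finType) (A B : Op F d S) : (forall x y, ent A x y = ent B x y) -> A = B.
Proof.
move=> h; apply/matrixP => i j; have := h (enum_val i) (enum_val j).
by rewrite /ent !enum_valK.
Qed.

Lemma ent_mul (S : finType) (A B : Op F d S) x y :
  ent (A *m B) x y = \sum_z ent A x z * ent B z y.
Proof.
rewrite /ent mxE (reindex (@enum_rank (tens d S))) //=.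
by apply: onW_bij; exact: enum_rank_bij.
Qed.

Lemma ent_1 (S : finType) x y : ent (1%:M : Op F d S) x y = (x == y)%:R.
Proof. by rewrite /ent mxE (inj_eq (@enum_rank_inj _)). Qed.

End Basics.

Section Embed.
Variables (F : fieldType) (d : nat).

Definition restr (S' S : finType) (e : S' -> S) (x : tens d S) : tens d S' :=
  [ffun s' => x (e s')].
Definition offeq (S' S : finType) (e : S' -> S) (x y : tens d S) : bool :=
  [forall s, (s \notin codom e) ==> (x s == y s)].

Lemma ent_embed (S' S : finType) (e : S' -> S) (X : Op F d S') x y :
  ent (embed e X) x y = ent X (restr e x) (restr e y) * (if offeq e x y then 1 else 0).
Proof. by rewrite ent_opmx. Qed.

Lemma notcodom (S' S : finType) (e : S' -> S) s :
  (s \notin codom e) = [forall a, e a != s].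
Proof.
apply/idP/forallP => [h a|h]; first by apply: contra h => /eqP <-; exact: codom_f.
by apply/codomP => -[a ea]; have := h a; rewrite ea eqxx.
Qed.

Lemma offeqP (S' S : finType) (e : S' -> S) (x y : tens d S) :
  reflect (forall s, (forall a, e a != s) -> x s = y s) (offeq e x y).
Proof.
apply: (iffP forallP) => h s.
  move=> ha; apply/eqP; have := h s; rewrite notcodom; move/implyP; apply.
  by apply/forallP.
by apply/implyP; rewrite notcodom => /forallP ha; apply/eqP/h.
Qed.

Definition upd (S' S : finType) (e : S' -> S) (x : tens d S) (w : tens d S') : tens d S :=
  [ffun s => if [pick a | e a == s] is Some a then w a else x s].

Section Inj.
Variables (S' S : finType) (e : S' -> S) (ei : injective e).

Lemma updE_in x w a : upd e x w (e a) = w a.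
Proof.
rewrite /upd ffunE; case: pickP => [b /eqP /ei -> //|h].
by have := h a; rewrite eqxx.
Qed.

Lemma updE_out x w s : (forall a, e a != s) -> upd e x w s = x s.
Proof.
move=> h; rewrite /upd ffunE; case: pickP => [b /eqP eb|//].
by have := h b; rewrite eb eqxx.
Qed.

Lemma restr_upd x w : restr e (upd e x w) = w.
Proof. by apply/ffunP => a; rewrite ffunE updE_in. Qed.

Lemma offeq_upd x w : offeq e x (upd e x w).
Proof. by apply/offeqP => s h; rewrite updE_out. Qed.

Lemma upd_restr x z : offeq e x z -> upd e x (restr e z) = z.
Proof.
move/offeqP=> h; apply/ffunP => s; rewrite /upd !ffunE.
case: pickP => [a /eqP <-|h2]; first by rewrite ffunE.
by apply: h => a; rewrite h2.
Qed.
End Inj.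

Lemma offeq_sym (S' S : finType) (e : S' -> S) (x y : tens d S) : offeq e x y = offeq e y x.
Proof. by apply/offeqP/offeqP => h s hs; rewrite h. Qed.

Lemma offeq_trans (S' S : finType) (e : S' -> S) (x y z : tens d S) :
  offeq e x z -> offeq e z y = offeq e x y.
Proof.
move/offeqP=> h1; apply/offeqP/offeqP => h2 s hs.
  by rewrite h1 // h2.
by rewrite -h1 // h2.
Qed.

Lemma embed_mul (S' S : finType) (e : S' -> S) (ei : injective e) (X Y : Op F d S') :
  embed e (X *m Y) = embed e X *m embed e Y.
Proof.
apply: op_ext => x y; rewrite ent_mul ent_embed ent_mul.
rewrite (bigID (offeq e x)) /= [X in _ = _ + X]big1 ?addr0; last first.
  by move=> z /negbTE hz; rewrite ent_embed hz mulr0 mul0r.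
rewrite (reindex_onto (upd e x) (restr e)); last by move=> z; exact: upd_restr.
rewrite mulr_suml /=; apply: eq_big => w.
  by rewrite offeq_upd // restr_upd // eqxx.
move=> _; rewrite !ent_embed restr_upd // offeq_upd // (offeq_trans _ (offeq_upd _ _ _)) //.
by case: (offeq e x y); rewrite !(mulr1, mulr0).
Qed.

Lemma embed_1 (S' S : finType) (e : S' -> S) :
  embed e (1%:M : Op F d S') = 1%:M.
Proof.
apply: op_ext => x y; rewrite ent_embed !ent_1.
case: (eqVneq x y) => [<-|nxy].
  rewrite eqxx; have -> : offeq e x x by apply/offeqP.
  by rewrite mulr1.
case: (eqVneq (restr e x) (restr e y)) => [hr|]; last by rewrite mul0r.
case: ifP => [/offeqP ho|]; last by rewrite mulr0.
case/eqP: nxy; apply/ffunP => s.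
case: (boolP [exists a, e a == s]) => [/existsP [a /eqP <-]|].
  by have := congr1 (fun f : tens d S' => f a) hr; rewrite !ffunE.
by rewrite negb_exists => /forallP h; apply: ho.
Qed.

Lemma embed_unit (S' S : finType) (e : S' -> S) (ei : injective e) (X : Op F d S') :
  X \in unitmx -> embed e X *m embed e (invmx X) = 1%:M /\ embed e (invmx X) *m embed e X = 1%:M.
Proof.
by move=> hX; rewrite -!embed_mul // mulmxV // mulVmx // embed_1.
Qed.

Lemma embed_big (S' S : finType) (e : S' -> S) (ei : injective e) n (X : 'I_n -> Op F d S') :
  embed e (\big[mulmx/1%:M]_(i < n) X i) = \big[mulmx/1%:M]_(i < n) embed e (X i).
Proof.
elim: n X => [|n IH] X; first by rewrite !big_ord0 embed_1.
by rewrite !big_ord_recr /= embed_mul // IH.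
Qed.

End Embed.

Section Embed2.
Variables (F : fieldType) (d : nat).

Lemma sum_only (T : finType) (G : T -> F) t0 :
  (forall t, t != t0 -> G t = 0) -> \sum_t G t = G t0.
Proof. by move=> h; rewrite (bigD1 t0) //= big1 ?addr0. Qed.

Lemma restr_comp (S1 S2 S3 : finType) (e1 : S1 -> S2) (e2 : S2 -> S3) (x : tens d S3) :
  restr e1 (restr e2 x) = restr (e2 \o e1) x.
Proof. by apply/ffunP => a; rewrite !ffunE. Qed.

Lemma embed_comp (S1 S2 S3 : finType) (e1 : S1 -> S2) (e2 : S2 -> S3) (ei : injective e2)
  (X : Op F d S1) : embed e2 (embed e1 X) = embed (e2 \o e1) X.
Proof.
apply: op_ext => x y; rewrite !ent_embed !restr_comp.
have H : (offeq e1 (restr e2 x) (restr e2 y) && offeq e2 x y) = offeq (e2 \o e1) x y.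
  apply/andP/offeqP => [[/offeqP h1 /offeqP h2] s hs | h].
    case: (boolP [exists b, e2 b == s]) => [/existsP [b /eqP eb]|].
      have := h1 b; rewrite !ffunE eb; apply => a; apply/eqP => eab.
      by move: (hs a); rewrite /= eab eb eqxx.
    by rewrite negb_exists => /forallP hn; apply: h2 => b; exact: hn b.
  split; apply/offeqP.
    move=> b hb; rewrite !ffunE; apply: h => a /=; rewrite (inj_eq ei); exact: hb a.
  by move=> s hs; apply: h => a; exact: hs (e1 a).
move: H; case: (offeq e1 _ _); case: (offeq e2 x y); case: (offeq (e2 \o e1) x y) => //= _;
  by rewrite !(mulr1, mulr0).
Qed.

Lemma embed_id (S : finType) (X : Op F d S) : embed (fun s => s) X = X.
Proof.
apply: op_ext => x y; rewrite ent_embed.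
have -> : offeq (fun s => s) x y by apply/offeqP => s /(_ s); rewrite eqxx.
have rE (z : tens d S) : restr (fun s => s) z = z by apply/ffunP => s; rewrite ffunE.
by rewrite !rE mulr1.
Qed.

Lemma embed_ext (S' S : finType) (e f : S' -> S) (X : Op F d S') :
  e =1 f -> embed e X = embed f X.
Proof. by move=> h; rewrite (functional_extensionality _ _ h). Qed.

Definition offeq2 (S1 S2 S : finType) (e : S1 -> S) (f : S2 -> S) (x y : tens d S) :=
  [forall s, ([forall a, e a != s] && [forall b, f b != s]) ==> (x s == y s)].

Lemma ent_embed_disj (S1 S2 S : finType) (e : S1 -> S) (f : S2 -> S)
  (disj : forall a b, e a != f b) (X : Op F d S1) (Y : Op F d S2) x y :
  ent (embed e X *m embed f Y) x y =
  ent X (restr e x) (restr e y) * ent Y (restr f x) (restr f y) *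
   (if offeq2 e f x y then 1 else 0).
Proof.
rewrite ent_mul.
pose z0 : tens d S := [ffun s => if [exists a, e a == s] then y s else x s].
rewrite (sum_only (t0:=z0)); last first.
  move=> z nz; rewrite !ent_embed; case: ifP => h1; last by rewrite mulr0 mul0r.
  case: ifP => h2; last by rewrite !mulr0.
  case/eqP: nz; apply/ffunP => s; rewrite ffunE; case: ifP => [/existsP [a /eqP <-]|/negbT].
    by apply/(offeqP _ _ _ h2) => b; rewrite eq_sym.
  rewrite negb_exists => /forallP hn; symmetry; exact: (offeqP _ _ _ h1).
have r1 : restr e z0 = restr e y.
  by apply/ffunP => a; rewrite !ffunE; case: existsP => // -[]; exists a.
have r2 : restr f z0 = restr f x.
  apply/ffunP => b; rewrite !ffunE; case: existsP => // -[a /eqP hab].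
  by have := disj a b; rewrite hab eqxx.
have o1 : offeq e x z0.
  apply/offeqP => s hs; rewrite ffunE; case: existsP => // -[a /eqP ha].
  by have := hs a; rewrite ha eqxx.
have o2 : offeq f z0 y = offeq2 e f x y.
  apply/offeqP/forallP => [h s|h s hs].
    apply/implyP => /andP [/forallP ha /forallP hb]; apply/eqP; rewrite -h //.
    by rewrite ffunE; case: existsP => // -[a /eqP ea]; have := ha a; rewrite ea eqxx.
  rewrite ffunE; case: (boolP [exists a, e a == s]) => //; rewrite negb_exists => hn.
  by apply/eqP; move/implyP: (h s); apply; rewrite hn; apply/forallP.
rewrite !ent_embed r1 r2 o1 o2; case: (offeq2 e f x y); by rewrite !(mulr1, mulr0).
Qed.

Lemma embed_comm (S1 S2 S : finType) (e : S1 -> S) (f : S2 -> S)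
  (disj : forall a b, e a != f b) (X : Op F d S1) (Y : Op F d S2) :
  embed e X *m embed f Y = embed f Y *m embed e X.
Proof.
apply: op_ext => x y; rewrite !ent_embed_disj //; last by move=> a b; rewrite eq_sym.
have -> : offeq2 f e x y = offeq2 e f x y.
  by apply: eq_forallb => s; rewrite andbC.
by rewrite [ent X _ _ * _]mulrC.
Qed.

Lemma sum_tjoin (S1 S2 : finType) (G : tens d (S1 + S2)%type -> F) :
  \sum_w G w = \sum_x \sum_z G (tjoin x z).
Proof.
rewrite pair_bigA /= (reindex (fun p : tens d S1 * tens d S2 => tjoin p.1 p.2)) //.
apply: onW_bij.
exists (fun w : tens d (S1 + S2)%type => ([ffun a => w (inl a)], [ffun b => w (inr b)])).
  by case=> x z; congr (_, _); apply/ffunP => a; rewrite !ffunE.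
by move=> w; apply/ffunP => -[a|b]; rewrite !ffunE.
Qed.

Lemma ent_ptrace (S1 S2 : finType) (A : Op F d (S1 + S2)%type) x y :
  ent (ptrace A) x y = \sum_z ent A (tjoin x z) (tjoin y z).
Proof. exact: ent_opmx. Qed.

Lemma ent_embed_inr (S1 S2 : finType) (D : Op F d S2) x z x' z' :
  ent (embed (@inr S1 S2) D) (tjoin x z) (tjoin x' z') =
  (if x == x' then 1 else 0) * ent D z z'.
Proof.
rewrite ent_embed.
have rE (x0 : tens d S1) z0 : restr inr (tjoin x0 z0) = z0 by apply/ffunP => b; rewrite !ffunE.
have -> : offeq inr (tjoin x z) (tjoin x' z') = (x == x').
  apply/offeqP/eqP => [h|<-].
    by apply/ffunP => a; have := h (inl a); rewrite !ffunE; apply.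
  by case=> [a|b] h; rewrite !ffunE //; have := h b; rewrite eqxx.
by rewrite !rE mulrC.
Qed.

Lemma sum_delta (T : finType) (G : T -> F) t0 :
  \sum_t (if t0 == t then 1 else 0) * G t = G t0.
Proof.
rewrite (sum_only (t0:=t0)) ?eqxx ?mul1r // => t nt.
by rewrite eq_sym (negbTE nt) mul0r.
Qed.

Lemma ptrace_cyc (S1 S2 : finType) (D : Op F d S2) (X : Op F d (S1 + S2)%type) :
  ptrace (embed inr D *m X) = ptrace (X *m embed inr D).
Proof.
apply: op_ext => x y; rewrite !ent_ptrace.
have L : forall z, ent (embed inr D *m X) (tjoin x z) (tjoin y z) =
   \sum_z' ent D z z' * ent X (tjoin x z') (tjoin y z).
  move=> z; rewrite ent_mul sum_tjoin.
  under eq_bigr => x' _ do under eq_bigr => z' _ do rewrite ent_embed_inr -mulrA.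
  under eq_bigr => x' _ do rewrite -big_distrr /=.
  by rewrite sum_delta.
have R : forall z, ent (X *m embed inr D) (tjoin x z) (tjoin y z) =
   \sum_z' ent X (tjoin x z) (tjoin y z') * ent D z' z.
  move=> z; rewrite ent_mul sum_tjoin exchange_big /=.
  apply: eq_bigr => z' _.
  under eq_bigr => x' _ do rewrite ent_embed_inr mulrCA eq_sym.
  by rewrite sum_delta.
under eq_bigr => z _ do rewrite L.
under [RHS]eq_bigr => z _ do rewrite R.
rewrite [RHS]exchange_big /=; apply: eq_bigr => z _; apply: eq_bigr => z' _.
by rewrite mulrC.
Qed.

End Embed2.

Definition psiL (U T1 J1 J2 : finType) (i : T1 -> U) : (T1 + J1)%type -> (U + (J1 + J2))%type :=
  fun t => match t with inl a => inl (i a) | inr j => inr (inl j) end.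
Definition psiR (U T2 J1 J2 : finType) (i : T2 -> U) : (T2 + J2)%type -> (U + (J1 + J2))%type :=
  fun t => match t with inl a => inl (i a) | inr j => inr (inr j) end.

Section Split.
Variables (F : fieldType) (d : nat).
Variables (U T1 T2 J1 J2 : finType) (i1 : T1 -> U) (i2 : T2 -> U).

Lemma ent_psiL (Y : Op F d (T1 + J1)%type) x z1 z2 v u1 u2 :
  ent (embed (psiL J2 i1) Y) (tjoin x (tjoin z1 z2)) (tjoin v (tjoin u1 u2)) =
  ent Y (tjoin (restr i1 x) z1) (tjoin (restr i1 v) u1) *
   ((if offeq i1 x v then 1 else 0) * (if z2 == u2 then 1 else 0)).
Proof.
rewrite ent_embed.
have rE x0 (w1 : tens d J1) (w2 : tens d J2) :
    restr (psiL J2 i1) (tjoin x0 (tjoin w1 w2)) = tjoin (restr i1 x0) w1.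
  by apply/ffunP => -[a|j]; rewrite !ffunE /= ?ffunE.
have -> : offeq (psiL J2 i1) (tjoin x (tjoin z1 z2)) (tjoin v (tjoin u1 u2)) =
          offeq i1 x v && (z2 == u2).
  apply/offeqP/andP => [h|[/offeqP h1 /eqP h2]].
    split.
      apply/offeqP => u hu; have := h (inl u); rewrite !ffunE; apply; case=> [a|j] //=.
      by apply/eqP => -[ea]; move: (hu a); rewrite ea eqxx.
    apply/eqP/ffunP => j; have := h (inr (inr j)); rewrite !ffunE; apply; case=> [a|j'] //.
  case=> [u|[j|j]] hs; rewrite !ffunE.
  - apply: h1 => a; apply/eqP => ea; move: (hs (inl a)); by rewrite /= ea eqxx.
  - by have := hs (inr j); rewrite /= eqxx.
  - by rewrite h2.
by rewrite !rE; case: (offeq i1 x v); case: (z2 == u2); rewrite !(mulr1, mulr0).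
Qed.

Lemma ent_psiR (Y : Op F d (T2 + J2)%type) x z1 z2 v u1 u2 :
  ent (embed (psiR J1 i2) Y) (tjoin x (tjoin z1 z2)) (tjoin v (tjoin u1 u2)) =
  ent Y (tjoin (restr i2 x) z2) (tjoin (restr i2 v) u2) *
   ((if offeq i2 x v then 1 else 0) * (if z1 == u1 then 1 else 0)).
Proof.
rewrite ent_embed.
have rE x0 (w1 : tens d J1) (w2 : tens d J2) :
    restr (psiR J1 i2) (tjoin x0 (tjoin w1 w2)) = tjoin (restr i2 x0) w2.
  by apply/ffunP => -[a|j]; rewrite !ffunE /= ?ffunE.
have -> : offeq (psiR J1 i2) (tjoin x (tjoin z1 z2)) (tjoin v (tjoin u1 u2)) =
          offeq i2 x v && (z1 == u1).
  apply/offeqP/andP => [h|[/offeqP h1 /eqP h2]].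
    split.
      apply/offeqP => u hu; have := h (inl u); rewrite !ffunE; apply; case=> [a|j] //=.
      by apply/eqP => -[ea]; move: (hu a); rewrite ea eqxx.
    apply/eqP/ffunP => j; have := h (inr (inl j)); rewrite !ffunE; apply; case=> [a|j'] //.
  case=> [u|[j|j]] hs; rewrite !ffunE.
  - apply: h1 => a; apply/eqP => ea; move: (hs (inl a)); by rewrite /= ea eqxx.
  - by rewrite h2.
  - by have := hs (inr j); rewrite /= eqxx.
by rewrite !rE; case: (offeq i2 x v); case: (z1 == u1); rewrite !(mulr1, mulr0).
Qed.

Lemma ptrace_split (Y1 : Op F d (T1 + J1)%type) (Y2 : Op F d (T2 + J2)%type) :
  ptrace (embed (psiL J2 i1) Y1 *m embed (psiR J1 i2) Y2) =
  embed i1 (ptrace Y1) *m embed i2 (ptrace Y2).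
Proof.
apply: op_ext => x y; rewrite ent_ptrace ent_mul sum_tjoin.
have H : forall z1 z2, ent (embed (psiL J2 i1) Y1 *m embed (psiR J1 i2) Y2)
    (tjoin x (tjoin z1 z2)) (tjoin y (tjoin z1 z2)) =
  \sum_v (ent Y1 (tjoin (restr i1 x) z1) (tjoin (restr i1 v) z1) *
          (if offeq i1 x v then 1 else 0)) *
         (ent Y2 (tjoin (restr i2 v) z2) (tjoin (restr i2 y) z2) *
          (if offeq i2 v y then 1 else 0)).
  move=> z1 z2; rewrite ent_mul sum_tjoin; apply: eq_bigr => v _.
  rewrite sum_tjoin (sum_only (t0 := z1)); last first.
    move=> u1 nu; apply: big1 => u2 _; rewrite ent_psiL ent_psiR.
    by rewrite eq_sym (negbTE nu) /= !(mulr0, mul0r).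
  rewrite (sum_only (t0 := z2)); last first.
    by move=> u2 nu; rewrite ent_psiL ent_psiR eq_sym (negbTE nu) /= !(mulr0, mul0r).
  rewrite ent_psiL ent_psiR !eqxx /=; ring.
under eq_bigr => z1 _ do under eq_bigr => z2 _ do rewrite H.
under [RHS]eq_bigr => v _ do rewrite !ent_embed !ent_ptrace.
under eq_bigr => z1 _ do rewrite exchange_big /=.
rewrite exchange_big /=; apply: eq_bigr => v _.
rewrite !mulr_suml; apply: eq_bigr => z1 _; rewrite mulr_sumr; apply: eq_bigr => z2 _; ring.
Qed.

Lemma ptrace_split' (Y1 : Op F d (T1 + J1)%type) (Y2 : Op F d (T2 + J2)%type) :
  ptrace (embed (psiR J1 i2) Y2 *m embed (psiL J2 i1) Y1) =
  embed i2 (ptrace Y2) *m embed i1 (ptrace Y1).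
Proof.
apply: op_ext => x y; rewrite ent_ptrace ent_mul sum_tjoin.
have H : forall z1 z2, ent (embed (psiR J1 i2) Y2 *m embed (psiL J2 i1) Y1)
    (tjoin x (tjoin z1 z2)) (tjoin y (tjoin z1 z2)) =
  \sum_v (ent Y2 (tjoin (restr i2 x) z2) (tjoin (restr i2 v) z2) *
          (if offeq i2 x v then 1 else 0)) *
         (ent Y1 (tjoin (restr i1 v) z1) (tjoin (restr i1 y) z1) *
          (if offeq i1 v y then 1 else 0)).
  move=> z1 z2; rewrite ent_mul sum_tjoin; apply: eq_bigr => v _.
  rewrite sum_tjoin (sum_only (t0 := z1)); last first.
    move=> u1 nu; apply: big1 => u2 _; rewrite ent_psiL ent_psiR.
    by rewrite eq_sym (negbTE nu) /= !(mulr0, mul0r).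
  rewrite (sum_only (t0 := z2)); last first.
    by move=> u2 nu; rewrite ent_psiL ent_psiR (negbTE nu) /= !(mulr0, mul0r).
  rewrite ent_psiL ent_psiR !eqxx /=; ring.
under eq_bigr => z1 _ do under eq_bigr => z2 _ do rewrite H.
under [RHS]eq_bigr => v _ do rewrite !ent_embed !ent_ptrace.
under eq_bigr => z1 _ do rewrite exchange_big /=.
rewrite exchange_big /=; apply: eq_bigr => v _.
rewrite exchange_big /=.
rewrite !mulr_suml; apply: eq_bigr => z2 _; rewrite mulr_sumr; apply: eq_bigr => z1 _; ring.
Qed.

End Split.

Section Prod.
Variables (F : fieldType) (k : nat).
Implicit Types (X Y D E : nat -> 'M[F]_k).

Lemma big_comm n Y (Z : 'M[F]_k) : (forall i, (i < n)%N -> Y i *m Z = Z *m Y i) ->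
  (\big[mulmx/1%:M]_(i < n) Y i) *m Z = Z *m \big[mulmx/1%:M]_(i < n) Y i.
Proof.
elim: n => [|n IH] h; first by rewrite big_ord0 mul1mx mulmx1.
rewrite big_ord_recr /= -mulmxA h // mulmxA IH ?mulmxA // => i hi.
by apply: h; rewrite ltnS ltnW.
Qed.

Lemma big_reorder n X Y : (forall i j, (i < j < n)%N -> Y i *m X j = X j *m Y i) ->
  \big[mulmx/1%:M]_(i < n) (X i *m Y i) =
  (\big[mulmx/1%:M]_(i < n) X i) *m \big[mulmx/1%:M]_(i < n) Y i.
Proof.
elim: n => [|n IH] h; first by rewrite !big_ord0 mulmx1.
rewrite !big_ord_recr /= IH; last by move=> i j /andP [hij hj]; apply: h; rewrite hij ltnS ltnW.
rewrite -!mulmxA; congr (_ *m _); rewrite !mulmxA; congr (_ *m _).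
apply: big_comm => i hi; apply: h; by rewrite hi /=.
Qed.

Lemma big_telescope n X Y D E :
  (forall i, (i <= n)%N -> X i = D i *m Y i *m E i.+1) ->
  (forall i, (0 < i <= n)%N -> E i *m D i = 1%:M) ->
  \big[mulmx/1%:M]_(i < n.+1) X i = D 0%N *m (\big[mulmx/1%:M]_(i < n.+1) Y i) *m E n.+1.
Proof.
elim: n => [|n IH] hX hE.
  by rewrite !big_ord1 hX.
rewrite big_ord_recr /= IH; last first.
- by move=> i /andP [h0 hi]; apply: hE; rewrite h0 ltnW.
- by move=> i hi; apply: hX; rewrite ltnW.
rewrite hX // [in RHS]big_ord_recr /= -!mulmxA; congr (_ *m _).
rewrite !mulmxA; congr (_ *m _); congr (_ *m _).
by rewrite -mulmxA hE ?mulmx1 // leqnn.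
Qed.

Lemma big_telescope' n X Y D E : (0 < n)%N ->
  (forall i, (i < n)%N -> X i = D i *m Y i *m E i.+1) ->
  (forall i, (0 < i < n)%N -> E i *m D i = 1%:M) ->
  \big[mulmx/1%:M]_(i < n) X i = D 0%N *m (\big[mulmx/1%:M]_(i < n) Y i) *m E n.
Proof. by case: n => // n _; exact: big_telescope. Qed.

End Prod.

Definition natf (M : Type) (x0 : M) n (f : 'I_n -> M) (i : nat) : M :=
  if insub i is Some o then f o else x0.

Lemma natfE M x0 n (f : 'I_n -> M) (o : 'I_n) : natf x0 f o = f o.
Proof. by rewrite /natf valK. Qed.

Lemma natf_lt M x0 n (f : 'I_n -> M) i (hi : (i < n)%N) : natf x0 f i = f (Ordinal hi).
Proof. exact: (natfE x0 f (Ordinal hi)). Qed.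

Lemma big_natf (F : fieldType) k n (f : 'I_n -> 'M[F]_k) :
  \big[mulmx/1%:M]_(i < n) f i = \big[mulmx/1%:M]_(i < n) natf 1%:M f i.
Proof. by apply: eq_bigr => i _; rewrite natfE. Qed.

Lemma natfM (F : fieldType) k n (f g : 'I_n -> 'M[F]_k) i :
  natf 1%:M (fun l => f l *m g l) i = natf 1%:M f i *m natf 1%:M g i.
Proof. by rewrite /natf; case: insub => //; rewrite mulmx1. Qed.


Section OrdProd.
Variables (F : fieldType) (k : nat).

Lemma big_reorder_ord n (f g : 'I_n -> 'M[F]_k) :
  (forall i j : 'I_n, (i < j)%N -> g i *m f j = f j *m g i) ->
  \big[mulmx/1%:M]_(i < n) (f i *m g i) =
  (\big[mulmx/1%:M]_(i < n) f i) *m \big[mulmx/1%:M]_(i < n) g i.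
Proof.
move=> h; rewrite big_natf.
rewrite (eq_bigr (fun i : 'I_n => natf 1%:M f i *m natf 1%:M g i)); last by move=> i _; rewrite natfM.
rewrite big_reorder; first by rewrite -!big_natf.
move=> i j /andP [hij hj]; have hi := ltn_trans hij hj.
by rewrite !natf_lt; apply: h.
Qed.

Lemma big_telescope_ord n (f g : 'I_n -> 'M[F]_k) (D E : nat -> 'M[F]_k) : (0 < n)%N ->
  (forall i : 'I_n, f i = D i *m g i *m E i.+1) ->
  (forall i, (0 < i < n)%N -> E i *m D i = 1%:M) ->
  \big[mulmx/1%:M]_(i < n) f i = D 0%N *m (\big[mulmx/1%:M]_(i < n) g i) *m E n.
Proof.
move=> hn hf hE; rewrite big_natf [X in _ = _ *m X *m _]big_natf.
apply: big_telescope' => // i hi.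
by rewrite !natf_lt hf.
Qed.
End OrdProd.

Definition i3 (k : nat) : 'I_3 := inord k.

Section Maps1.
Variable L : nat.
Local Notation I2 := 'I_(2 * L).
Local Notation U := (I2 * 'I_3)%type.
Local Notation K := ((unit + unit) + unit)%type.

Definition gmap (l : I2) (i : 'I_6) : (U + K)%type :=
  match val i with
  | 0 => inl (l, i3 0) | 1 => inl (l, i3 1) | 2 => inl (l, i3 2)
  | 3 => inr (inl (inl tt)) | 4 => inr (inl (inr tt)) | _ => inr (inr tt) end.

Definition gcode (x : (U + K)%type) : nat :=
  match x with inl (_, j) => val j | inr (inl (inl _)) => 3
  | inr (inl (inr _)) => 4 | inr (inr _) => 5 end.

Lemma gcodeE l i : gcode (gmap l i) = val i.
Proof.
case: i => -[|[|[|[|[|[|m]]]]]] hi; rewrite /gmap /gcode /= ?inordK //.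
Qed.

Lemma gmap_inj l : injective (gmap l).
Proof. by move=> a b h; apply: val_inj; rewrite -(gcodeE l a) -(gcodeE l b) h. Qed.

Lemma gmap_eq l l' a b : gmap l a = gmap l' b -> a = b /\ ((val a < 3)%N -> l = l').
Proof.
move=> h; have hv : val a = val b by rewrite -(gcodeE l a) -(gcodeE l' b) h.
have eab : a = b := val_inj hv; subst b; clear hv; split => // ha.
by move: h; case: a ha => -[|[|[|m]]] hb //= _; rewrite /gmap /= => -[].
Qed.

Definition iA (t : (I2 + I2)%type) : U := match t with inl l => (l, i3 0) | inr l => (l, i3 1) end.
Definition iB (t : (I2 + I2)%type) : U := match t with inl l => (l, i3 0) | inr l => (l, i3 2) end.
Definition iC (t : (I2 + I2)%type) : U := match t with inl l => (l, i3 1) | inr l => (l, i3 2) end.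

Lemma i3_inj a b : (a < 3)%N -> (b < 3)%N -> i3 a = i3 b -> a = b.
Proof. by move=> ha hb /(congr1 (@nat_of_ord 3)); rewrite /i3 !inordK. Qed.

Lemma iA_inj : injective iA.
Proof.
case=> [a|a] [b|b] /= => e; move: (congr1 fst e) (congr1 (fun u : U => nat_of_ord u.2) e);
  rewrite /= /i3 ?inordK //= => -> h; first [done | discriminate h].
Qed.
Lemma iB_inj : injective iB.
Proof.
case=> [a|a] [b|b] /= => e; move: (congr1 fst e) (congr1 (fun u : U => nat_of_ord u.2) e);
  rewrite /= /i3 ?inordK //= => -> h; first [done | discriminate h].
Qed.
Lemma iC_inj : injective iC.
Proof.
case=> [a|a] [b|b] /= => e; move: (congr1 fst e) (congr1 (fun u : U => nat_of_ord u.2) e);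
  rewrite /= /i3 ?inordK //= => -> h; first [done | discriminate h].
Qed.

Definition kap (i : 'I_3) : K :=
  match val i with 0 => inl (inl tt) | 1 => inl (inr tt) | _ => inr tt end.

Definition pAB := @psiL U U (unit + unit)%type unit (fun u => u).
Definition pA := @psiL U (I2 + I2)%type unit unit iA.
Definition pB := @psiR U (I2 + I2)%type unit unit iB.
Definition pC := @psiR U (I2 + I2)%type (unit + unit)%type unit iC.

Lemma psiL_inj (UU T J1 J2 : finType) (i : T -> UU) : injective i -> injective (@psiL UU T J1 J2 i).
Proof. by move=> hi [a|a] [b|b] //= [] => [/hi|] ->. Qed.
Lemma psiR_inj (UU T J1 J2 : finType) (i : T -> UU) : injective i -> injective (@psiR UU T J1 J2 i).
Proof. by move=> hi [a|a] [b|b] //= [] => [/hi|] ->. Qed.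

Lemma pAB_inj : injective pAB. Proof. exact: psiL_inj. Qed.
Lemma pA_inj : injective pA. Proof. exact: psiL_inj iA_inj. Qed.
Lemma pB_inj : injective pB. Proof. exact: psiR_inj iB_inj. Qed.
Lemma pC_inj : injective pC. Proof. exact: psiR_inj iC_inj. Qed.

Ltac tri_cases := apply: functional_extensionality;
  case => -[|[|[|m]]] hi; rewrite /= /gmap /tri /i6 /= ?inordK //.

Lemma gmapA l : gmap l \o tri (i6 0) (i6 1) (i6 3) = pAB \o (pA \o placeR l).
Proof. by tri_cases. Qed.
Lemma gmapB l : gmap l \o tri (i6 0) (i6 2) (i6 4) = pAB \o (pB \o placeR l).
Proof. by tri_cases. Qed.
Lemma gmapC l : gmap l \o tri (i6 1) (i6 2) (i6 5) = pC \o placeR l.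
Proof. by tri_cases. Qed.
Lemma gmapD l : gmap l \o tri (i6 3) (i6 4) (i6 5) = inr \o kap.
Proof. by tri_cases. Qed.

End Maps1.

Definition tA := tri (i6 0) (i6 1) (i6 3).
Definition tB := tri (i6 0) (i6 2) (i6 4).
Definition tC := tri (i6 1) (i6 2) (i6 5).

Ltac solve_sh := case => -[|[|[|?]]] ?; case => -[|[|[|?]]] ? //;
  move/(congr1 (@nat_of_ord 6)); rewrite /tA /tB /tC /tri /i6 /= ?inordK //;
  try (move=> ?; discriminate).

Lemma shAB : forall a b, tA a = tB b -> (val (tA a) < 3)%N. Proof. solve_sh. Qed.
Lemma shBA : forall a b, tB a = tA b -> (val (tB a) < 3)%N. Proof. solve_sh. Qed.
Lemma shAC : forall a b, tA a = tC b -> (val (tA a) < 3)%N. Proof. solve_sh. Qed.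
Lemma shCA : forall a b, tC a = tA b -> (val (tC a) < 3)%N. Proof. solve_sh. Qed.
Lemma shBC : forall a b, tB a = tC b -> (val (tB a) < 3)%N. Proof. solve_sh. Qed.
Lemma shCB : forall a b, tC a = tB b -> (val (tC a) < 3)%N. Proof. solve_sh. Qed.

Lemma colrN s k : colr (~~ s) k = ~~ colr s k.
Proof. by rewrite /colr addNb. Qed.
Lemma colrS s k : colr s k.+1 = ~~ colr s k.
Proof. by rewrite /colr /= addbN. Qed.

Section Comm.
Variables (F : fieldType) (d L : nat).
Lemma comm_g (l l' : 'I_(2 * L)) (p q : 'I_3 -> 'I_6) (X Y : Op F d 'I_3) :
  l != l' -> (forall a b, p a = q b -> (val (p a) < 3)%N) ->
  embed (gmap l \o p) X *m embed (gmap l' \o q) Y =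
  embed (gmap l' \o q) Y *m embed (gmap l \o p) X.
Proof.
move=> hl hpq; apply: embed_comm => a b; apply/eqP => /= /gmap_eq [e h].
by rewrite (h (hpq _ _ e)) eqxx in hl.
Qed.
End Comm.

Section Step1.
Variables (F : fieldType) (d : nat) (P : Type) (L : nat) (Rf Rd Rdd Rddd : opfamily F d P)
  (r1 : 'I_(2 * L) -> P).
Hypothesis hBTE : forall s, BTE Rf Rd Rdd Rddd s.
Hypothesis hRddd : forall s a b c, Rddd s a b c \in unitmx.
Hypothesis hL : (0 < L)%N.

Local Notation I2 := 'I_(2 * L).
Local Notation U := (I2 * 'I_3)%type.
Local Notation K := ((unit + unit) + unit)%type.

Definition opA s (l : I2) ra rb := embed (gmap l \o tA) (Rf s (r1 l) ra rb).
Definition opB s (l : I2) ra rc := embed (gmap l \o tB) (Rd s (r1 l) ra rc).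
Definition opC s (l : I2) rb rc := embed (gmap l \o tC) (Rdd s (r1 l) rb rc).
Definition opD s ra rb rc : Op F d (U + K)%type := embed (@inr U K \o kap) (Rddd s ra rb rc).
Definition opE s ra rb rc : Op F d (U + K)%type := embed (@inr U K \o kap) (invmx (Rddd s ra rb rc)).

Lemma kap_inj : injective kap.
Proof.
move=> a b; case: a => -[|[|[|?]]] ?; case: b => -[|[|[|?]]] ? //= h; apply: val_inj => //.
Qed.

Lemma inrkap_inj : injective (@inr U K \o kap).
Proof. by move=> a b [] /kap_inj. Qed.

Lemma BTE_l s l ra rb rc :
  opA s l ra rb *m opB (~~ s) l ra rc *m opC s l rb rc *m opD (~~ s) ra rb rc =
  opD s ra rb rc *m opC (~~ s) l rb rc *m opB s l ra rc *m opA (~~ s) l ra rb.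
Proof.
have := congr1 (embed (gmap l)) (hBTE s (r1 l) ra rb rc).
rewrite /at123 /at124 /at134 /at234 !(embed_mul (@gmap_inj _ l)) !(embed_comp _ (@gmap_inj _ l)).
by rewrite gmapD.
Qed.

Lemma DE s ra rb rc : opD s ra rb rc *m opE s ra rb rc = 1%:M /\
                      opE s ra rb rc *m opD s ra rb rc = 1%:M.
Proof. exact: embed_unit inrkap_inj _ (hRddd _ _ _ _). Qed.

Lemma repA s l ra rb : opA s l ra rb = embed (@pAB L) (embed (@pA L) (embed (placeR l) (Rf s (r1 l) ra rb))).
Proof. by rewrite (embed_comp _ (@pA_inj L)) (embed_comp _ (@pAB_inj L)) /opA /tA gmapA. Qed.
Lemma repB s l ra rc : opB s l ra rc = embed (@pAB L) (embed (@pB L) (embed (placeR l) (Rd s (r1 l) ra rc))).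
Proof. by rewrite (embed_comp _ (@pB_inj L)) (embed_comp _ (@pAB_inj L)) /opB /tB gmapB. Qed.
Lemma repC s l rb rc : opC s l rb rc = embed (@pC L) (embed (placeR l) (Rdd s (r1 l) rb rc)).
Proof. by rewrite (embed_comp _ (@pC_inj L)) /opC /tC gmapC. Qed.

Lemma bigA s ra rb : \big[mulmx/1%:M]_(l < 2 * L) opA (colr s l.+1) l ra rb =
  embed (@pAB L) (embed (@pA L) (\big[mulmx/1%:M]_(l < 2 * L) embed (placeR l) (Rf (colr s l.+1) (r1 l) ra rb))).
Proof. by rewrite (embed_big (@pA_inj L)) (embed_big (@pAB_inj L)); apply: eq_bigr => l _; exact: repA. Qed.
Lemma bigB s ra rc : \big[mulmx/1%:M]_(l < 2 * L) opB (colr s l.+1) l ra rc =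
  embed (@pAB L) (embed (@pB L) (\big[mulmx/1%:M]_(l < 2 * L) embed (placeR l) (Rd (colr s l.+1) (r1 l) ra rc))).
Proof. by rewrite (embed_big (@pB_inj L)) (embed_big (@pAB_inj L)); apply: eq_bigr => l _; exact: repB. Qed.
Lemma bigC s rb rc : \big[mulmx/1%:M]_(l < 2 * L) opC (colr s l.+1) l rb rc =
  embed (@pC L) (\big[mulmx/1%:M]_(l < 2 * L) embed (placeR l) (Rdd (colr s l.+1) (r1 l) rb rc)).
Proof. by rewrite (embed_big (@pC_inj L)); apply: eq_bigr => l _; exact: repC. Qed.

Lemma colr_2L s : colr s (2 * L).+1 = colr s 1.
Proof. by rewrite /colr /= oddM andFb. Qed.

Lemma cycD s ra rb rc (Z : Op F d (U + K)%type) :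
  ptrace (opD s ra rb rc *m Z *m opE s ra rb rc) = ptrace Z.
Proof.
have hinr : injective (@inr U K) by move=> x y [].
rewrite -mulmxA {1}/opD -(embed_comp _ hinr) ptrace_cyc (embed_comp _ hinr).
by rewrite -mulmxA (DE s ra rb rc).2 mulmx1.
Qed.

Lemma TR s ra rb rc :
  embed (@iA L) (traceRed Rf s r1 ra rb) *m embed (@iB L) (traceRed Rd (~~ s) r1 ra rc)
    *m embed (@iC L) (traceRed Rdd s r1 rb rc) =
  embed (@iC L) (traceRed Rdd (~~ s) r1 rb rc) *m embed (@iB L) (traceRed Rd s r1 ra rc)
    *m embed (@iA L) (traceRed Rf (~~ s) r1 ra rb).
Proof.
have tele : \big[mulmx/1%:M]_(l < 2 * L)
    (opA (colr s l.+1) l ra rb *m opB (colr (~~ s) l.+1) l ra rc *m opC (colr s l.+1) l rb rc)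
  = opD (colr s 1) ra rb rc *m \big[mulmx/1%:M]_(l < 2 * L)
    (opC (colr (~~ s) l.+1) l rb rc *m opB (colr s l.+1) l ra rc *m opA (colr (~~ s) l.+1) l ra rb)
   *m opE (colr s (2 * L).+1) ra rb rc.
  apply: (big_telescope_ord (D := fun i => opD (colr s i.+1) ra rb rc)
                            (E := fun i => opE (colr s i.+1) ra rb rc)).
  - by rewrite muln_gt0 hL.
  - move=> l; have := BTE_l (colr s l.+1) l ra rb rc; rewrite !colrN /= => hb.
    rewrite (colrS s l.+1) -[LHS]mulmx1 -(DE (~~ colr s l.+1) ra rb rc).1 mulmxA hb.
    by rewrite !mulmxA.
  - by move=> i _; exact: (DE _ _ _ _).2.
have reoL : \big[mulmx/1%:M]_(l < 2 * L)
    (opA (colr s l.+1) l ra rb *m opB (colr (~~ s) l.+1) l ra rc *m opC (colr s l.+1) l rb rc)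
  = (\big[mulmx/1%:M]_(l < 2 * L) opA (colr s l.+1) l ra rb) *m
    (\big[mulmx/1%:M]_(l < 2 * L) opB (colr (~~ s) l.+1) l ra rc) *m
    (\big[mulmx/1%:M]_(l < 2 * L) opC (colr s l.+1) l rb rc).
  rewrite big_reorder_ord; last first.
    move=> i j hij; have hn : i != j by rewrite neq_ltn hij.
    rewrite mulmxA /opC /opA (comm_g _ _ hn shCA) -!mulmxA; congr (_ *m _).
    by rewrite /opB (comm_g _ _ hn shCB).
  rewrite big_reorder_ord //.
  move=> i j hij; have hn : i != j by rewrite neq_ltn hij.
  by rewrite /opB /opA (comm_g _ _ hn shBA).
have reoR : \big[mulmx/1%:M]_(l < 2 * L)
    (opC (colr (~~ s) l.+1) l rb rc *m opB (colr s l.+1) l ra rc *m opA (colr (~~ s) l.+1) l ra rb)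
  = (\big[mulmx/1%:M]_(l < 2 * L) opC (colr (~~ s) l.+1) l rb rc) *m
    (\big[mulmx/1%:M]_(l < 2 * L) opB (colr s l.+1) l ra rc) *m
    (\big[mulmx/1%:M]_(l < 2 * L) opA (colr (~~ s) l.+1) l ra rb).
  rewrite big_reorder_ord; last first.
    move=> i j hij; have hn : i != j by rewrite neq_ltn hij.
    rewrite mulmxA /opC /opA (comm_g _ _ hn shAC) -!mulmxA; congr (_ *m _).
    by rewrite /opB (comm_g _ _ hn shAB).
  rewrite big_reorder_ord //.
  move=> i j hij; have hn : i != j by rewrite neq_ltn hij.
  by rewrite /opB /opC (comm_g _ _ hn shBC).
have := congr1 (@ptrace F d U K) tele; rewrite colr_2L cycD reoL reoR.
rewrite !bigA !bigB !bigC -!(embed_mul (@pAB_inj L)) -mulmxA -(embed_mul (@pAB_inj L)).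
rewrite /pAB /pC ptrace_split ptrace_split' embed_id embed_id /pA /pB ptrace_split ptrace_split'.
by rewrite /traceRed !mulmxA.
Qed.

End Step1.

Section Maps2.
Variables (L M : nat).
Local Notation I2 := 'I_(2 * L).
Local Notation U := (I2 * 'I_3)%type.
Local Notation W := ('I_(2 * L) * 'I_(2 * M))%type.
Local Notation K2 := ('I_(2 * L) + 'I_(2 * L))%type.

Definition hmap (m : 'I_(2 * M)) (u : U) : (W + K2)%type :=
  match val u.2 with 0 => inl (u.1, m) | 1 => inr (inl u.1) | _ => inr (inr u.1) end.

Definition hcode (x : (W + K2)%type) : I2 * nat :=
  match x with inl (l, _) => (l, 0%N) | inr (inl l) => (l, 1%N) | inr (inr l) => (l, 2%N) end.

Lemma hcodeE m u : hcode (hmap m u) = (u.1, val u.2).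
Proof. by case: u => l [[|[|[|?]]] ?]. Qed.

Lemma hmap_inj m : injective (hmap m).
Proof.
move=> [l j] [l' j'] h; have := congr1 hcode h; rewrite !hcodeE /= => -[-> hj].
by congr (_, _); apply: val_inj.
Qed.

Definition qP := @psiL W W I2 I2 (fun w => w).
Definition qQ := @psiR W W I2 I2 (fun w => w).

Lemma qP_inj : injective qP. Proof. exact: psiL_inj. Qed.
Lemma qQ_inj : injective qQ. Proof. exact: psiR_inj. Qed.

Lemma hmapA m : hmap m \o (@iA L) = qP \o placeT m.
Proof. by apply: functional_extensionality => -[l|l]; rewrite /= /hmap /i3 /= inordK. Qed.
Lemma hmapB m : hmap m \o (@iB L) = qQ \o placeT m.
Proof. by apply: functional_extensionality => -[l|l]; rewrite /= /hmap /i3 /= inordK. Qed.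
Lemma hmapC m : hmap m \o (@iC L) = @inr W K2.
Proof. by apply: functional_extensionality => -[l|l]; rewrite /= /hmap /i3 /= inordK. Qed.

Lemma hdisj (i j : 'I_(2 * M)) : i != j ->
  forall a b, (hmap i \o (@iA L)) a != (hmap j \o (@iB L)) b.
Proof.
move=> hij [l|l] [l'|l']; rewrite /= /hmap /i3 /= !inordK //.
by apply/eqP => -[_ e]; rewrite e eqxx in hij.
Qed.

End Maps2.

Section Step2.
Variables (F : fieldType) (d : nat) (P : Type) (L M : nat) (Rf Rd Rdd : opfamily F d P)
  (r1 : 'I_(2 * L) -> P) (r2 : 'I_(2 * M) -> P).
Hypothesis hM : (0 < M)%N.
Hypothesis hRdd : forall s r3 r4, traceRed Rdd s r1 r3 r4 \in unitmx.
Hypothesis hTR : forall s ra rb rc,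
  embed (@iA L) (traceRed Rf s r1 ra rb) *m embed (@iB L) (traceRed Rd (~~ s) r1 ra rc)
    *m embed (@iC L) (traceRed Rdd s r1 rb rc) =
  embed (@iC L) (traceRed Rdd (~~ s) r1 rb rc) *m embed (@iB L) (traceRed Rd s r1 ra rc)
    *m embed (@iA L) (traceRed Rf (~~ s) r1 ra rb).

Local Notation I2 := 'I_(2 * L).
Local Notation W := ('I_(2 * L) * 'I_(2 * M))%type.
Local Notation K2 := ('I_(2 * L) + 'I_(2 * L))%type.

Definition opP s (m : 'I_(2 * M)) r := embed (hmap m \o (@iA L)) (traceRed Rf s r1 (r2 m) r).
Definition opQ s (m : 'I_(2 * M)) r := embed (hmap m \o (@iB L)) (traceRed Rd s r1 (r2 m) r).
Definition opZ s r r' : Op F d (W + K2)%type := embed (@inr W K2) (traceRed Rdd s r1 r r').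
Definition opZi s r r' : Op F d (W + K2)%type := embed (@inr W K2) (invmx (traceRed Rdd s r1 r r')).

Lemma inr_inj2 : injective (@inr W K2). Proof. by move=> x y []. Qed.

Lemma ZZi s r r' : opZ s r r' *m opZi s r r' = 1%:M /\ opZi s r r' *m opZ s r r' = 1%:M.
Proof. exact: embed_unit inr_inj2 _ (hRdd _ _ _). Qed.

Lemma TR_m s m r r' :
  opP s m r *m opQ (~~ s) m r' *m opZ s r r' = opZ (~~ s) r r' *m opQ s m r' *m opP (~~ s) m r.
Proof.
have := congr1 (embed (@hmap L M m)) (hTR s (r2 m) r r').
by rewrite !(embed_mul (@hmap_inj L M m)) !(embed_comp _ (@hmap_inj L M m)) hmapC.
Qed.

Lemma colr_2M s : colr s (2 * M).+1 = colr s 1.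
Proof. by rewrite /colr /= oddM andFb. Qed.

Lemma bigP s r : \big[mulmx/1%:M]_(m < 2 * M) opP (colr s m.+1) m r =
  embed (@qP L M) (\big[mulmx/1%:M]_(m < 2 * M) embed (@placeT L M m) (traceRed Rf (colr s m.+1) r1 (r2 m) r)).
Proof.
rewrite (embed_big (@qP_inj L M)); apply: eq_bigr => m _.
by rewrite (embed_comp _ (@qP_inj L M)) /opP hmapA.
Qed.
Lemma bigQ s r : \big[mulmx/1%:M]_(m < 2 * M) opQ (colr s m.+1) m r =
  embed (@qQ L M) (\big[mulmx/1%:M]_(m < 2 * M) embed (@placeT L M m) (traceRed Rd (colr s m.+1) r1 (r2 m) r)).
Proof.
rewrite (embed_big (@qQ_inj L M)); apply: eq_bigr => m _.
by rewrite (embed_comp _ (@qQ_inj L M)) /opQ hmapB.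
Qed.

Lemma step2 s r r' :
  layerT Rf s r1 r2 r *m layerT Rd (~~ s) r1 r2 r' = layerT Rd s r1 r2 r' *m layerT Rf (~~ s) r1 r2 r.
Proof.
have tele : \big[mulmx/1%:M]_(m < 2 * M) (opP (colr s m.+1) m r *m opQ (colr (~~ s) m.+1) m r')
  = opZ (~~ colr s 1) r r' *m
    \big[mulmx/1%:M]_(m < 2 * M) (opQ (colr s m.+1) m r' *m opP (colr (~~ s) m.+1) m r)
   *m opZi (~~ colr s (2 * M).+1) r r'.
  apply: (big_telescope_ord (D := fun i => opZ (~~ colr s i.+1) r r')
                            (E := fun i => opZi (~~ colr s i.+1) r r')).
  - by rewrite muln_gt0 hM.
  - move=> m; have := TR_m (colr s m.+1) m r r'; rewrite !colrN => hb.
    rewrite (colrS s m.+1) negbK -[LHS]mulmx1 -(ZZi (colr s m.+1) r r').1 mulmxA hb.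
    by rewrite !mulmxA.
  - by move=> i _; exact: (ZZi _ _ _).2.
have reoL : \big[mulmx/1%:M]_(m < 2 * M) (opP (colr s m.+1) m r *m opQ (colr (~~ s) m.+1) m r')
  = (\big[mulmx/1%:M]_(m < 2 * M) opP (colr s m.+1) m r) *m
    (\big[mulmx/1%:M]_(m < 2 * M) opQ (colr (~~ s) m.+1) m r').
  rewrite big_reorder_ord // => i j hij; have hn : j != i by rewrite neq_ltn hij orbT.
  by rewrite /opQ /opP (embed_comm (hdisj hn)).
have reoR : \big[mulmx/1%:M]_(m < 2 * M) (opQ (colr s m.+1) m r' *m opP (colr (~~ s) m.+1) m r)
  = (\big[mulmx/1%:M]_(m < 2 * M) opQ (colr s m.+1) m r') *m
    (\big[mulmx/1%:M]_(m < 2 * M) opP (colr (~~ s) m.+1) m r).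
  rewrite big_reorder_ord // => i j hij; have hn : i != j by rewrite neq_ltn hij.
  by rewrite /opQ /opP (embed_comm (hdisj hn)).
have := congr1 (@ptrace F d W K2) tele; rewrite colr_2M -mulmxA ptrace_cyc -mulmxA.
rewrite (ZZi _ _ _).2 mulmx1 reoL reoR !bigP !bigQ.
rewrite /qP /qQ ptrace_split ptrace_split' !embed_id.
by rewrite /layerT.
Qed.

End Step2.

Section Spectral.
Variables (F : fieldType) (n : nat).

Lemma simple_comm (A B C : 'M[F]_n) : diag_simple A ->
  A *m B = B *m A -> A *m C = C *m A -> B *m C = C *m B.
Proof.
case=> [[Q Qu hD] [s [hs us hall]]].
have {hD} hD : is_diag_mx (Q *m A *m invmx Q).
  by move: hD; rewrite /similar_to /= /conjmx pinvmxE.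
have [dA eA] := diag_mxP _ hD.
have Qi : invmx Q *m Q = 1%:M by rewrite mulVmx.
have Qi' : Q *m invmx Q = 1%:M by rewrite mulmxV.
have eig : forall a, eigenvalue A a -> exists j, dA 0 j = a.
  move=> a /eigenvalueP [v hv nv]; set w := v *m invmx Q.
  have hw : w *m diag_mx dA = a *: w.
    by rewrite -eA /w !mulmxA -[v *m invmx Q *m Q]mulmxA Qi mulmx1 hv scalemxAl.
  have hvw : v = w *m Q by rewrite /w -mulmxA Qi mulmx1.
  clearbody w.
  case: (boolP [exists j, w 0 j != 0]) => [/existsP [j hj]|].
    exists j; have := congr1 (fun M : 'rV[F]_n => M 0 j) hw; rewrite mul_mx_diag !mxE.
    rewrite [a * _]mulrC => e; exact: (mulfI hj e).
  rewrite negb_exists => /forallP hz; case/negP: nv.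
  have w0 : w = 0 by apply/rowP => j; rewrite mxE; apply/eqP; have := hz j; rewrite negbK.
  by rewrite hvw w0 mul0mx.
pose f := fun j : 'I_n => dA 0 j.
have sub : {subset s <= codom f}.
  move=> x hx; have [j <-] := eig x (allP hall x hx); exact: codom_f.
have uc : uniq (codom f) by apply: (leq_size_uniq us sub); rewrite size_codom card_ord hs.
have finj : injective f by apply/injectiveP.
have diagX : forall X, A *m X = X *m A -> exists dX, Q *m X *m invmx Q = diag_mx dX.
  move=> X hX; apply/diag_mxP/is_diag_mxP => i j hij.
  set X' := Q *m X *m invmx Q.
  have hc : diag_mx dA *m X' = X' *m diag_mx dA.
    rewrite -eA /X'.
    have s1 : Q *m A *m invmx Q *m (Q *m X *m invmx Q) = Q *m (A *m X) *m invmx Q.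
      by rewrite !mulmxA -[Q *m A *m invmx Q *m Q]mulmxA Qi mulmx1.
    have s2 : Q *m X *m invmx Q *m (Q *m A *m invmx Q) = Q *m (X *m A) *m invmx Q.
      by rewrite !mulmxA -[Q *m X *m invmx Q *m Q]mulmxA Qi mulmx1.
    by rewrite s1 s2 hX.
  clearbody X'; have := congr1 (fun M : 'M[F]_n => M i j) hc; rewrite mul_mx_diag mul_diag_mx !mxE => e.
  have : X' i j * (dA 0 i - dA 0 j) = 0 by rewrite mulrBr mulrC e mulrC subrr.
  move/eqP; rewrite mulf_eq0 subr_eq0 => /orP [/eqP //|/eqP /finj eij].
  by rewrite eij eqxx in hij.
have rec : forall X, X = invmx Q *m (Q *m X *m invmx Q) *m Q.
  by move=> X; rewrite !mulmxA Qi mul1mx -mulmxA Qi mulmx1.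
move=> hB hC; have [dB eB] := diagX _ hB; have [dC eC] := diagX _ hC.
rewrite (rec B) (rec C) eB eC.
have -> : invmx Q *m diag_mx dB *m Q *m (invmx Q *m diag_mx dC *m Q) =
          invmx Q *m (diag_mx dB *m diag_mx dC) *m Q.
  by rewrite !mulmxA -[invmx Q *m diag_mx dB *m Q *m invmx Q]mulmxA Qi' mulmx1.
have -> : invmx Q *m diag_mx dC *m Q *m (invmx Q *m diag_mx dB *m Q) =
          invmx Q *m (diag_mx dC *m diag_mx dB) *m Q.
  by rewrite !mulmxA -[invmx Q *m diag_mx dC *m Q *m invmx Q]mulmxA Qi' mulmx1.
rewrite !mulmx_diag; congr (_ *m diag_mx _ *m _); apply/rowP => j; rewrite !mxE mulrC //.
Qed.
End Spectral.


Lemma main_generic (F : fieldType) (d : nat) (P : Type) (L M : nat)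
    (hL : (0 < L)%N) (hM : (0 < M)%N)
    (Rf Rd Rdd Rddd : opfamily F d P)
    (r1 : 'I_(2 * L) -> P) (r2 : 'I_(2 * M) -> P)
    (hBTE : forall s : bool, BTE Rf Rd Rdd Rddd s)
    (hRddd : forall (s : bool) (a b c : P), Rddd s a b c \in unitmx)
    (hRdd : forall (s : bool) (r3 r4 : P), traceRed Rdd s r1 r3 r4 \in unitmx)
    (hdiag : exists t t' : P, diag_simple (twoLayerT Rd r1 r2 t t')) :
  forall r r' s s' : P,
    twoLayerT Rf r1 r2 r r' *m twoLayerT Rf r1 r2 s s'
    = twoLayerT Rf r1 r2 s s' *m twoLayerT Rf r1 r2 r r'.
Proof.
move=> r r' s s'.
have st2 := step2 r2 hM hRdd (TR r1 hBTE hRddd hL).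
have e0 := st2 false; have e1 := st2 true; simpl in e0, e1.
have comm : forall a a' b b', twoLayerT Rf r1 r2 a a' *m twoLayerT Rd r1 r2 b b' =
                             twoLayerT Rd r1 r2 b b' *m twoLayerT Rf r1 r2 a a'.
  move=> a a' b b'; rewrite /twoLayerT !mulmxA.
  rewrite -(mulmxA (layerT Rf false r1 r2 a)) (e1 a' b) !mulmxA (e0 a b).
  rewrite -(mulmxA _ (layerT Rf false r1 r2 a')) (e0 a' b') !mulmxA.
  by rewrite -(mulmxA _ (layerT Rf true r1 r2 a)) (e1 a b') !mulmxA.
case: hdiag => t [t' hd].
by apply: (simple_comm hd); rewrite comm.
Qed.

Unset Implicit Arguments.

Theorem mainTheorem3 (R : realType) (d : nat) (P : Type) (L M : nat)
    (hL : (0 < L)%N) (hM : (0 < M)%N)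
    (Rf Rd Rdd Rddd : opfamily (Cx R) d P)
    (r1 : 'I_(2 * L) -> P) (r2 : 'I_(2 * M) -> P)
    (hBTE : forall s : bool, BTE Rf Rd Rdd Rddd s)
    (hRddd : forall (s : bool) (a b c : P), Rddd s a b c \in unitmx)
    (hRdd : forall (s : bool) (r3 r4 : P), traceRed Rdd s r1 r3 r4 \in unitmx)
    (hdiag : exists t t' : P, diag_simple (twoLayerT Rd r1 r2 t t')) :
  forall r r' s s' : P,
    twoLayerT Rf r1 r2 r r' *m twoLayerT Rf r1 r2 s s'
    = twoLayerT Rf r1 r2 s s' *m twoLayerT Rf r1 r2 r r'.
Proof. exact: (main_generic hL hM hBTE hRddd hRdd hdiag). Qed.
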